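(* Consider the two-signal setting in the context. Assume $f=f_xf_y$ with $f_x,f_y$ symmetric about $0$ (cdfs $F_x,F_y$), and let $\delta,\gamma,\xi>0$ satisfy $1-\delta\ge\gamma$, $1>3\delta+2\gamma$, $$\frac{F_x(\xi)}{1-F_x(\xi)}\cdot\frac{\sup_{a\in[0,\delta]}f_y(\eta-a)}{\inf_{a\in[1-\delta,1]}f_y(\eta-a)}\le\frac{1-c}{c}\ \text{ for all }\eta\ge1-\delta-\gamma,\qquad F_x(\xi)F_y(\gamma)\ge1-\delta.$$ Let $t\in\mathbb{R}$ and let $A:\mathbb{R}\to[0,1]$ be measurable with $A(\theta)\in[1-\delta,1]$ for $\theta<t$ and $A(\theta)\in[0,\delta]$ for $\theta\ge t$. Then: (1) if $y_i\ge1-\delta-\gamma$ and $x_i\le t+\xi$, then $P[\theta<t\mid A(\cdot),(x_i,y_i)]\ge c$; (2) if $y_i\le\delta+\gamma$ and $x_i\ge t-\xi$, then $P[\theta\ge t\mid A(\cdot),(x_i,y_i)]\ge c$; (3) for every $\theta<t$, $P[y_i\ge1-\delta-\gamma\text{ and }x_i\le t+\xi\mid A(\cdot),\theta]\ge1-\delta$; (4) for every $\theta\ge t$, $P[y_i\le\delta+\gamma\text{ and }x_i>t-\xi\mid A(\cdot),\theta]\ge1-\delta$.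
   Context: Agent $i$ observes $x_i=\theta+\epsilon^x_i$ and $y_i=A(\theta)+\epsilon^y_i$, where $\epsilon^x_i,\epsilon^y_i$ are independent with densities $f_x,f_y$; $c\in(0,1)$. Agents have an (improper) uniform prior on $\theta\in\mathbb{R}$, so the posterior given $(x,y)$ and the conjectured function $A(\cdot)$ is $P[\theta\in S\mid A(\cdot),(x,y)]=\int_S f_x(x-\theta)f_y(y-A(\theta))\,d\theta\big/\int_{\mathbb{R}} f_x(x-\theta)f_y(y-A(\theta))\,d\theta$ (the limit of posteriors under uniform priors on $[t-N,t+N]$). In (3) and (4), the probability is over the errors $(\epsilon^x_i,\epsilon^y_i)$ for the given fundamental $\theta$. *)

(* Defs.v *)
From HB Require Import structures.
From mathcomp Require Import all_boot all_order all_algebra.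
From mathcomp Require Import all_classical all_reals all_analysis.
Set Implicit Arguments. Unset Strict Implicit. Unset Printing Implicit Defensive.
Import Order.TTheory GRing.Theory Num.Theory.
Import numFieldNormedType.Exports.
Local Open Scope classical_set_scope.
Local Open Scope ring_scope.

Section Defs.
Variable R : realType.
Local Notation leb := (@lebesgue_measure R).

Definition is_density (f : R -> R) : Prop :=
  [/\ measurable_fun setT f, (forall u, 0 <= f u) &
      (\int[leb]_u (f u)%:E = 1%:E)%E].

Definition symmetric0 (f : R -> R) : Prop := forall u, f (- u) = f u.

Definition dens_cdf (f : R -> R) (z : R) : R := Rintegral leb `]-oo, z] f.

(* unnormalized posterior mass of S given (x,y) and conjectured A,
   under the improper uniform prior *)
Definition post_mass (fx fy A : R -> R) (x y : R) (S : set R) : \bar R :=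
  (\int[leb]_(th in S) (fx (x - th) * fy (y - A th))%:E)%E.

Definition posterior (fx fy A : R -> R) (x y : R) (S : set R) : R :=
  fine (post_mass fx fy A x y S) / fine (post_mass fx fy A x y setT).

Definition posterior_welldef (fx fy A : R -> R) (x y : R) : Prop :=
  (0 < post_mass fx fy A x y setT < +oo)%E.

(* probability, over the independent errors (ex, ey) with joint density
   fx(ex) fy(ey), that (x, y) = (theta + ex, A theta + ey) lies in E *)
Definition signal_prob (fx fy A : R -> R) (theta : R) (E : R -> R -> Prop)
  : \bar R :=
  (\int[leb \x leb]_(e in [set e : R * R | E (theta + e.1)%R (A theta + e.2)%R])
     (fx e.1 * fy e.2)%:E)%E.

End Defs.

(* Main.v *)
Require Import Defs.
From HB Require Import structures.
From mathcomp Require Import all_boot all_order all_algebra.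
From mathcomp Require Import all_classical all_reals all_analysis.
From mathcomp Require Import lra ring measurable_realfun.
Import Order.TTheory GRing.Theory Num.Theory.
Import numFieldNormedType.Exports.
Local Open Scope classical_set_scope.
Local Open Scope ring_scope.

Section S.
Variable R : realType.
Local Notation leb := (@lebesgue_measure R).

Definition reflf (x : R) : measurableTypeR R -> measurableTypeR R := fun th : R => x - th.
Lemma mrefl (x : R) : measurable_fun setT (reflf x).
Proof. by apply: continuous_measurable_fun => z; apply: continuousB => //; apply: cvg_cst. Qed.

Lemma leb_refl (x : R) (A : set R) : measurable A ->
  pushforward leb (reflf x) A = leb A.
Proof.
move=> mA.
have := @lebesgue_measure_unique R (measure_function_pushforward__canonical__measure_function_Measure leb (mrefl x)).
move=> /(_ _ _ mA) <- //= _ [[a b]] _ <-.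
rewrite /pushforward.
have -> : reflf x @^-1` `]a, b] = (`[x - b, x - a[%classic : set R).
  apply/seteqP; split => z /=; rewrite /reflf !in_itv /=.
  - case/andP => h1 h2; apply/andP; split; lra.
  - case/andP => h1 h2; apply/andP; split; lra.
rewrite !lebesgue_measure_itv /= !lte_fin.
have -> : (x - b < x - a) = (a < b) by apply/idP/idP; lra.
by case: ifP => // _; rewrite -EFinD; congr (_%:E); lra.
Qed.

Lemma int_refl (x : R) (h : R -> R) (D P : set R) : measurable D ->
  measurable_fun setT h -> (forall u, 0 <= h u) ->
  (forall th, P th <-> D (x - th)) ->
  (\int[leb]_(th in P) (h (x - th))%:E = \int[leb]_(u in D) (h u)%:E)%E.
Proof.
move=> mD mh h0 PD.
have -> : P = reflf x @^-1` D by apply/seteqP; split => z /PD.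
have mh' : measurable_fun D (fun u => (h u)%:E).
  apply/measurable_EFinP; exact: measurable_funS mh.
have h0' : {in D, forall u, (0 <= (h u)%:E)%E} by move=> u _; rewrite lee_fin.
have E := @ge0_integral_pushforward _ _ _ _ R (reflf x) (mrefl x) leb D (fun u => (h u)%:E) mD mh' h0'.
rewrite /comp /reflf /= in E; rewrite -E.
apply: (eq_measure_integral leb); first exact: mrefl.
move=> ? B mB _; exact: leb_refl.
Qed.

Lemma int_scale (k : R) (f : R -> R) (D : set R) : measurable D ->
  measurable_fun setT f -> 0 <= k -> (forall u, 0 <= f u) ->
  (\int[leb]_(u in D) (k * f u)%:E = k%:E * \int[leb]_(u in D) (f u)%:E)%E.
Proof.
move=> mD mf k0 f0.
under eq_integral => u _ do rewrite EFinM.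
rewrite ge0_integralZl_EFin //.
- by move=> u _; rewrite lee_fin.
- apply/measurable_EFinP; exact: measurable_funS mf.
Qed.

Lemma ereal_real (e : \bar R) : (0 <= e)%E -> (e < +oo)%E -> exists2 r, e = r%:E & 0 <= r.
Proof. by case: e => [r| |] //= r0 _; exists r => //; rewrite -lee_fin. Qed.

Lemma core (c Fv : R) (w g : R -> R) (S T : set R) :
  0 < c < 1 -> 0 < Fv -> Fv <= 1 ->
  measurable S -> measurable T -> [disjoint S & T] -> S `|` T = setT ->
  measurable_fun setT w -> measurable_fun setT g ->
  (forall u, 0 <= w u) -> (forall u, 0 <= g u) ->
  (exists th0, S th0) ->
  (\int[leb]_(u in S) (w u)%:E + \int[leb]_(u in T) (w u)%:E = 1)%E ->
  (\int[leb]_(u in T) (w u)%:E <= Fv%:E)%E ->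
  (forall th th', T th -> S th' -> c * Fv * g th <= (1 - c) * (1 - Fv) * g th') ->
  (0 < \int[leb]_(u in setT) (w u * g u)%:E < +oo)%E ->
  c <= fine (\int[leb]_(u in S) (w u * g u)%:E) /
       fine (\int[leb]_(u in setT) (w u * g u)%:E).
Proof.
move=> /andP[c0 c1] F0 F1 mS mT dST UST mw mg w0 g0 [th0 Sth0] W12 W2F HH /andP[M0 Mfin].
have mwg : measurable_fun setT (fun u => w u * g u) by exact: measurable_funM.
have mwgE : measurable_fun setT (fun u => (w u * g u)%:E) by exact/measurable_EFinP.
have mwE : measurable_fun setT (fun u => (w u)%:E) by exact/measurable_EFinP.
have wg0 u : 0 <= w u * g u by rewrite mulr_ge0.
have EM : (\int[leb]_(u in setT) (w u * g u)%:E = \int[leb]_(u in S) (w u * g u)%:E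
   + \int[leb]_(u in T) (w u * g u)%:E)%E.
  rewrite -UST ge0_integral_setU //; first by rewrite UST.
  by move=> u _; rewrite lee_fin.
have M10 : (0 <= \int[leb]_(u in S) (w u * g u)%:E)%E.
  by apply: integral_ge0 => u _; rewrite lee_fin.
have M20 : (0 <= \int[leb]_(u in T) (w u * g u)%:E)%E.
  by apply: integral_ge0 => u _; rewrite lee_fin.
have W10 : (0 <= \int[leb]_(u in S) (w u)%:E)%E.
  by apply: integral_ge0 => u _; rewrite lee_fin.
have W20 : (0 <= \int[leb]_(u in T) (w u)%:E)%E.
  by apply: integral_ge0 => u _; rewrite lee_fin.
have [m1 Em1 m10] : exists2 m1, (\int[leb]_(u in S) (w u * g u)%:E = m1%:E)%E & 0 <= m1.
  apply: ereal_real => //; apply: le_lt_trans Mfin; rewrite EM.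
  by rewrite leeDl.
have [m2 Em2 m20] : exists2 m2, (\int[leb]_(u in T) (w u * g u)%:E = m2%:E)%E & 0 <= m2.
  apply: ereal_real => //; apply: le_lt_trans Mfin; rewrite EM.
  by rewrite leeDr.
have [w1 Ew1 w10] : exists2 w1, (\int[leb]_(u in S) (w u)%:E = w1%:E)%E & 0 <= w1.
  apply: ereal_real => //; apply: (@le_lt_trans _ _ 1%E); last exact: ltey.
  by rewrite -W12 leeDl.
have [w2 Ew2 w20] : exists2 w2, (\int[leb]_(u in T) (w u)%:E = w2%:E)%E & 0 <= w2.
  apply: ereal_real => //; apply: (@le_lt_trans _ _ 1%E); last exact: ltey.
  by rewrite -W12 leeDr.
rewrite EM Em1 Em2 /= in M0 *.
rewrite Ew1 Ew2 -EFinD in W12; move/eqP: W12; rewrite eqe => /eqP W12.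
rewrite Ew2 lee_fin in W2F.
rewrite lte_fin in M0.
rewrite ler_pdivlMr //.
have mS' : forall (k : R) f, measurable_fun setT f -> measurable_fun S (fun u => (k * f u)%:E).
  move=> k f mf; apply/measurable_EFinP; apply: measurable_funM => //; exact: measurable_funS mf.
have mT' : forall (k : R) f, measurable_fun setT f -> measurable_fun T (fun u => (k * f u)%:E).
  move=> k f mf; apply/measurable_EFinP; apply: measurable_funM => //; exact: measurable_funS mf.
have [F1'|F1'] := eqVneq Fv 1.
  have gT : forall th, T th -> g th = 0.
    move=> th Tth; have := HH th th0 Tth Sth0; rewrite F1' subrr mulr0 mul0r mulr1 => h.
    have := g0 th; nra.
  have : (\int[leb]_(u in T) (w u * g u)%:E = \int[leb]_(u in T) (cst 0 u))%E.
    by apply: eq_integral => u; rewrite inE => Tu; rewrite gT // mulr0.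
  rewrite integral0 Em2 => /eqP; rewrite eqe => /eqP ->.
  nra.
have Flt : Fv < 1 by rewrite lt_neqAle F1' F1.
have cF0 : 0 <= c * Fv by rewrite mulr_ge0 // ltW.
have cF1 : 0 <= (1 - c) * (1 - Fv) by rewrite mulr_ge0 // subr_ge0 ltW.
have w1E : w1 = 1 - w2 by lra.
have w1p : 0 < w1 by lra.
have StepA : forall th, T th -> c * Fv * g th * w1 <= (1 - c) * (1 - Fv) * m1.
  move=> th Tth.
  have E1 : (((c * Fv * g th) * w1)%:E = \int[leb]_(u in S) ((c * Fv * g th) * w u)%:E)%E.
    rewrite int_scale //; first by rewrite Ew1 EFinM.
    exact: mulr_ge0.
  have E2 : ((((1 - c) * (1 - Fv)) * m1)%:E = \int[leb]_(u in S) (((1 - c) * (1 - Fv)) * (w u * g u))%:E)%E.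
    by rewrite (int_scale _ (fun u => w u * g u)) //; first by rewrite Em1 EFinM.
  rewrite -lee_fin E1 E2; apply: ge0_le_integral => //.
  - by move=> u _; rewrite lee_fin; exact: mulr_ge0 (mulr_ge0 cF0 (g0 th)) (w0 u).
  - exact: mS'.
  - exact: mS'.
  - move=> u Su; rewrite lee_fin; have := ler_wpM2r (w0 u) (HH th u Tth Su); lra.
have StepB : c * Fv * w1 * m2 <= (1 - c) * (1 - Fv) * m1 * w2.
  have E1 : (((c * Fv * w1) * m2)%:E = \int[leb]_(u in T) ((c * Fv * w1) * (w u * g u))%:E)%E.
    rewrite (int_scale _ (fun u => w u * g u)) //; first by rewrite Em2 EFinM.
    exact: mulr_ge0.
  have E2 : ((((1 - c) * (1 - Fv) * m1) * w2)%:E = \int[leb]_(u in T) (((1 - c) * (1 - Fv) * m1) * w u)%:E)%E.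
    rewrite int_scale //; first by rewrite Ew2 EFinM.
    exact: mulr_ge0.
  rewrite -lee_fin E1 E2; apply: ge0_le_integral => //.
  - by move=> u _; rewrite lee_fin; exact: mulr_ge0 (mulr_ge0 cF0 w10) (wg0 u).
  - exact: mT'.
  - exact: mT'.
  - move=> u Tu; rewrite lee_fin; have := ler_wpM2r (w0 u) (StepA u Tu); lra.
have P : 0 < Fv * w1 by rewrite mulr_gt0.
have h : (1 - Fv) * w2 <= Fv * w1.
  rewrite w1E; have := mulr_ge0 (ltW F0) w20; lra.
have Q : Fv * w1 * (c * m2) <= Fv * w1 * ((1 - c) * m1).
  have m1c : 0 <= (1 - c) * m1 by rewrite mulr_ge0 // subr_ge0 ltW.
  have := ler_wpM2l m1c h; lra.
rewrite ler_pM2l // in Q.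
lra.
Qed.

Lemma dens_le1 (f : R -> R) (S : set R) : is_density f -> measurable S ->
  (0 <= \int[leb]_(u in S) (f u)%:E <= 1)%E.
Proof.
case=> mf f0 f1 mS; apply/andP; split.
  by apply: integral_ge0 => u _; rewrite lee_fin.
rewrite -f1; apply: ge0_subset_integral => //.
- by apply/measurable_EFinP.
- by move=> u _; rewrite lee_fin.
Qed.

Lemma cdfE (f : R -> R) (z : R) : is_density f ->
  ((dens_cdf f z)%:E = \int[leb]_(u in `]-oo, z]) (f u)%:E)%E.
Proof.
move=> df; have /andP[h0 h1] := dens_le1 _ _ df (measurable_itv `]-oo, z]).
rewrite /dens_cdf /Rintegral fineK // ge0_fin_numE //.
by apply: le_lt_trans h1 _; exact: ltey.
Qed.

Lemma cdf01 (f : R -> R) (z : R) : is_density f -> 0 <= dens_cdf f z <= 1.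
Proof.
move=> df; have /andP[h0 h1] := dens_le1 _ _ df (measurable_itv `]-oo, z]).
by rewrite -(cdfE f z df) !lee_fin in h0 h1; rewrite h0 h1.
Qed.

Lemma rect (f g : R -> R) (X Y : set R) : measurable X -> measurable Y ->
  measurable_fun setT f -> measurable_fun setT g ->
  (forall u, 0 <= f u) -> (forall u, 0 <= g u) ->
  (\int[leb \x leb]_(e in X `*` Y) (f e.1 * g e.2)%:E =
   \int[leb]_(u in X) (f u)%:E * \int[leb]_(u in Y) (g u)%:E)%E.
Proof.
move=> mX mY mf mg f0 g0.
pose F := fun u => \1_X u * f u.
pose G := fun u => \1_Y u * g u.
have F0 u : 0 <= F u by rewrite /F mulr_ge0 // indicE.
have G0 u : 0 <= G u by rewrite /G mulr_ge0 // indicE.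
have mF : measurable_fun setT F.
  by apply: measurable_funM => //; apply: measurable_indic.
have mG : measurable_fun setT G.
  by apply: measurable_funM => //; apply: measurable_indic.
have EX : (\int[leb]_(u in X) (f u)%:E = \int[leb]_u (F u)%:E)%E.
  rewrite integral_mkcond; apply: eq_integral => u _.
  by rewrite /patch /F indicE; case: (u \in X); rewrite ?mul1r ?mul0r.
have EY : (\int[leb]_(u in Y) (g u)%:E = \int[leb]_u (G u)%:E)%E.
  rewrite integral_mkcond; apply: eq_integral => u _.
  by rewrite /patch /G indicE; case: (u \in Y); rewrite ?mul1r ?mul0r.
rewrite EX EY integral_mkcond.
transitivity (\int[leb \x leb]_e (F e.1 * G e.2)%:E)%E.
  apply: eq_integral => e _; rewrite /patch /F /G !indicE.
  case: e => [a b] /=.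
  rewrite in_setX /=.
  by case: (a \in X); case: (b \in Y); rewrite ?mul1r ?mul0r ?mulr0.
rewrite fubini_tonelli1 /=.
- rewrite /fubini_F /=.
  under eq_integral => u _ do rewrite (int_scale _ G) //.
  by rewrite ge0_integralZr //; [apply/measurable_EFinP | move=> u _; rewrite lee_fin|apply: integral_ge0 => u _; rewrite lee_fin].
- apply/measurable_EFinP; apply: measurable_funM.
  + exact: measurableT_comp mF measurable_fst.
  + exact: measurableT_comp mG measurable_snd.
- by move=> e; rewrite lee_fin mulr_ge0.
Qed.

Lemma sp_eq (fx fy A : R -> R) (th : R) (E : R -> R -> Prop) (X Y : set R) :
  (forall a b, E (th + a) (A th + b) <-> X a /\ Y b) ->
  signal_prob fx fy A th E =
  (\int[leb \x leb]_(e in X `*` Y) (fx e.1 * fy e.2)%:E)%E.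
Proof.
move=> HE; rewrite /signal_prob; congr integral.
by apply/seteqP; split => -[a b] /= /HE.
Qed.
End S.
Arguments mrefl {R}. Arguments int_refl {R}. Arguments int_scale {R}. Arguments core {R}. Arguments dens_le1 {R}. Arguments cdfE {R}. Arguments cdf01 {R}. Arguments rect {R}. Arguments sp_eq {R}.

Theorem lemma2 (R : realType) (c : R) (fx fy : R -> R)
  (delta gamma xi t : R) (A : R -> R) :
  0 < c < 1 ->
  is_density fx -> is_density fy ->
  symmetric0 fx -> symmetric0 fy ->
  0 < delta -> 0 < gamma -> 0 < xi ->
  gamma <= 1 - delta ->
  3 * delta + 2 * gamma < 1 ->
  (forall eta : R, 1 - delta - gamma <= eta ->
     forall a b : R, 0 <= a <= delta -> 1 - delta <= b <= 1 ->
       c * dens_cdf fx xi * fy (eta - a) <= (1 - c) * (1 - dens_cdf fx xi) * fy (eta - b)) ->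
  dens_cdf fx xi * dens_cdf fy gamma >= 1 - delta ->
  measurable_fun setT A ->
  (forall th, 0 <= A th <= 1) ->
  (forall th, th < t -> 1 - delta <= A th <= 1) ->
  (forall th, t <= th -> 0 <= A th <= delta) ->
  [/\ (forall x y : R, 1 - delta - gamma <= y -> x <= t + xi ->
         posterior_welldef fx fy A x y ->
         posterior fx fy A x y [set th | th < t] >= c),
      (forall x y : R, y <= delta + gamma -> t - xi <= x ->
         posterior_welldef fx fy A x y ->
         posterior fx fy A x y [set th | t <= th] >= c),
      (forall theta : R, theta < t ->
         (signal_prob fx fy A theta
            (fun x y => (1 - delta - gamma <= y)%R /\ (x <= t + xi)%R)
          >= (1 - delta)%:E)%E) &
      (forall theta : R, t <= theta ->
         (signal_prob fx fy A theta
            (fun x y => (y <= delta + gamma)%R /\ (t - xi < x)%R)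
          >= (1 - delta)%:E)%E)].
Proof.
move=> hc dfx dfy sx sy d0 g0 xi0 gd d3 H FF mA A01 A1 A2.
have [Fx0 Fx1] : 0 <= dens_cdf fx xi /\ dens_cdf fx xi <= 1.
  by have /andP[] := cdf01 fx xi dfx.
have [Fy0 Fy1] : 0 <= dens_cdf fy gamma /\ dens_cdf fy gamma <= 1.
  by have /andP[] := cdf01 fy gamma dfy.
have Fxp : 0 < dens_cdf fx xi.
  rewrite lt_neqAle Fx0 andbT; apply/eqP => h; move: FF; rewrite -h mul0r; lra.
have [mfx fx0 fx1] := dfx.
have [mfy fy0 fy1] := dfy.
have mw : forall x : R, measurable_fun setT (fun th : R => fx (x - th)).
  move=> x; apply: measurableT_comp => //; apply: measurable_funB => //.
have mg : forall y : R, measurable_fun setT (fun th : R => fy (y - A th)).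
  move=> y; apply: measurableT_comp => //; apply: measurable_funB => //.
have mlt : measurable [set th : R | th < t].
  rewrite (_ : [set th : R | th < t] = `]-oo, t[%classic); first exact: measurable_itv.
  by apply/seteqP; split => z /=; rewrite in_itv /= ?andbT.
have mge : measurable [set th : R | t <= th].
  rewrite (_ : [set th : R | t <= th] = `[t, +oo[%classic); first exact: measurable_itv.
  by apply/seteqP; split => z /=; rewrite in_itv /= ?andbT.
have dj1 : [disjoint [set th : R | th < t] & [set th | t <= th]].
  by rewrite /disj_set; apply/eqP/seteqP; split => z //= [h1 h2]; lra.
have dj2 : [disjoint [set th : R | t <= th] & [set th | th < t]].
  by rewrite /disj_set; apply/eqP/seteqP; split => z //= [h1 h2]; lra.
have U1 : [set th : R | th < t] `|` [set th | t <= th] = setT.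
  by apply/seteqP; split => z //= _; case: (ltP z t) => h; [left|right].
have U2 : [set th : R | t <= th] `|` [set th | th < t] = setT.
  by apply/seteqP; split => z //= _; case: (ltP z t) => h; [right|left].
have Wtot : forall x : R, (\int[lebesgue_measure]_(u in [set th : R | (th < t)%R]) (fx (x - u)%R)%:E +
   \int[lebesgue_measure]_(u in [set th : R | (t <= th)%R]) (fx (x - u)%R)%:E = 1)%E.
  move=> x; rewrite -ge0_integral_setU //; last first.
  - by move=> u _; rewrite lee_fin.
  - by rewrite U1; apply/measurable_EFinP; exact: mw.
  rewrite U1 (int_refl x fx setT setT) //.
have Hex : exists th0 : R, [set th : R | th < t] th0 by exists (t - 1); rewrite /=; lra.
have Hex2 : exists th0 : R, [set th : R | t <= th] th0 by exists t; rewrite /=.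
have cdfx := cdfE fx xi dfx.
split.
- move=> x y Hy Hx Hwd; rewrite /posterior /post_mass.
  apply: (core c (dens_cdf fx xi) (fun th => fx (x - th)) (fun th => fy (y - A th))
    [set th : R | th < t] [set th | t <= th]) => //.
  + rewrite (int_refl x fx `]-oo, x - t] [set th | t <= th]) //; first last.
      by move=> th /=; rewrite in_itv /=; split => ?; lra.
    rewrite cdfx; apply: ge0_subset_integral => //.
    * by apply/measurable_EFinP; exact: measurable_funS mfx.
    * by move=> u _; rewrite lee_fin.
    * by move=> u /=; rewrite !in_itv /= => ?; lra.
  + move=> th th' /= h1 h2; apply: H => //.
    * by have := A2 th h1.
    * by have := A1 th' h2.
- move=> x y Hy Hx Hwd; rewrite /posterior /post_mass.
  apply: (core c (dens_cdf fx xi) (fun th => fx (x - th)) (fun th => fy (y - A th))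
    [set th : R | t <= th] [set th | th < t]) => //.
  + by rewrite addeC; exact: Wtot.
  + rewrite (int_refl x fx `]x - t, +oo[ [set th | th < t]) //; first last.
      by move=> th /=; rewrite in_itv /= andbT; split => ?; lra.
    rewrite -(int_refl 0 fx `]x - t, +oo[ `]-oo, t - x[) //; first last.
      by move=> th /=; rewrite !in_itv /= ?andbT; split => ?; lra.
    under eq_integral => u _ do rewrite sub0r sx.
    rewrite cdfx; apply: ge0_subset_integral => //.
    * by apply/measurable_EFinP; exact: measurable_funS mfx.
    * by move=> u _; rewrite lee_fin.
    * by move=> u /=; rewrite !in_itv /= => ?; lra.
  + have e : forall z, fy (1 - y - (1 - z)) = fy (y - z).
      by move=> z; rewrite -[fy (y - z)]sy; congr (fy _); ring.
    move=> th th' /= h1 h2; rewrite -!e; apply: H.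
    * lra.
    * by have := A1 th h1; lra.
    * by have := A2 th' h2; lra.
- move=> th Hth.
  rewrite (sp_eq fx fy A th _ `]-oo, t + xi - th] `[1 - delta - gamma - A th, +oo[); last first.
    by move=> a b /=; rewrite !in_itv /= ?andbT; split => -[? ?]; split; lra.
  rewrite rect //; try exact: measurable_itv.
  have E3 : (\int[lebesgue_measure]_(u in `]-oo, gamma]) (fy u)%:E =
             \int[lebesgue_measure]_(u in `[(- gamma)%R, +oo[) (fy u)%:E)%E.
    rewrite -(int_refl 0 fy `[- gamma, +oo[ `]-oo, gamma]) //; last first.
      by move=> u /=; rewrite !in_itv /= ?andbT; split => ?; lra.
    by apply: eq_integral => u _; rewrite sub0r sy.
  apply: (@le_trans _ _ ((dens_cdf fx xi)%:E * (dens_cdf fy gamma)%:E)%E).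
    by rewrite -EFinM lee_fin.
  apply: lee_pmul; rewrite ?lee_fin //.
  + rewrite cdfx; apply: ge0_subset_integral => //.
    * by apply/measurable_EFinP; exact: measurable_funS mfx.
    * by move=> u _; rewrite lee_fin.
    * by move=> u /=; rewrite !in_itv /= => ?; lra.
  + rewrite (cdfE fy gamma dfy) E3; apply: ge0_subset_integral => //.
    * by apply/measurable_EFinP; exact: measurable_funS mfy.
    * by move=> u _; rewrite lee_fin.
    * by move=> u /=; rewrite !in_itv /= ?andbT => ?; have := A1 th Hth; lra.
- move=> th Hth.
  rewrite (sp_eq fx fy A th _ `]t - xi - th, +oo[ `]-oo, delta + gamma - A th]); last first.
    by move=> a b /=; rewrite !in_itv /= ?andbT; split => -[? ?]; split; lra.
  rewrite rect //; try exact: measurable_itv.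
  have E3 : ((dens_cdf fx xi)%:E =
             \int[lebesgue_measure]_(u in `](- xi)%R, +oo[) (fx u)%:E)%E.
    rewrite cdfx -integral_itv_bndo_bndc; last by apply/measurable_EFinP; exact: measurable_funS mfx.
    rewrite -(int_refl 0 fx `]- xi, +oo[ `]-oo, xi[) //; last first.
      by move=> u /=; rewrite !in_itv /= ?andbT; split => ?; lra.
    by apply: eq_integral => u _; rewrite sub0r sx.
  apply: (@le_trans _ _ ((dens_cdf fx xi)%:E * (dens_cdf fy gamma)%:E)%E).
    by rewrite -EFinM lee_fin.
  apply: lee_pmul; rewrite ?lee_fin //.
  + rewrite E3; apply: ge0_subset_integral => //.
    * by apply/measurable_EFinP; exact: measurable_funS mfx.
    * by move=> u _; rewrite lee_fin.
    * by move=> u /=; rewrite !in_itv /= ?andbT => ?; lra.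
  + rewrite (cdfE fy gamma dfy); apply: ge0_subset_integral => //.
    * by apply/measurable_EFinP; exact: measurable_funS mfy.
    * by move=> u _; rewrite lee_fin.
    * by move=> u /=; rewrite !in_itv /= => ?; have := A2 th Hth; lra.
Qed.
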